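(* Let $A,B,C,D,E$ be five distinct points in the plane, not all collinear, such that $$AB\parallel EC,\quad BC\parallel AD,\quad CD\parallel BE,\quad DE\parallel CA,\quad EA\parallel DB.$$ Then $ABCDE$ is either an affine regular pentagon or an affine regular star pentagon. That is, there exist an affine bijection $f$ of the plane and a regular pentagon with vertices $V_0,\dots,V_4$ in cyclic order such that either $$(A,B,C,D,E)=(f(V_0),f(V_1),f(V_2),f(V_3),f(V_4))$$ or $$(A,B,C,D,E)=(f(V_0),f(V_2),f(V_4),f(V_1),f(V_3)).$$
   Context: An affine map of the plane is a bijection of the plane that maps collinear points to collinear points. $XY\parallel ZW$ means that the line through $X,Y$ is parallel to the line through $Z,W$. *)

(* Defs.v *)
From Stdlib Require Import Reals List.
Open Scope R_scope.

Definition point := (R * R)%type.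

Definition cross (P Q R0 S : point) : R :=
  (fst Q - fst P) * (snd S - snd R0) - (snd Q - snd P) * (fst S - fst R0).

Definition collinear (P Q S : point) : Prop := cross P Q P S = 0.

(* XY || ZW : the line through X,Y is parallel to the line through Z,W
   (used only for X <> Y, Z <> W). *)
Definition parallel (X Y Z W : point) : Prop := cross X Y Z W = 0.

Definition all_collinear (l : list point) : Prop :=
  exists P Q : point, P <> Q /\ forall X, In X l -> collinear P Q X.

Definition affine_map (f : point -> point) : Prop :=
  (forall x y, f x = f y -> x = y) /\ (forall y, exists x, f x = y) /\
  (forall P Q S, collinear P Q S -> collinear (f P) (f Q) (f S)).

Definition regular_pentagon (V0 V1 V2 V3 V4 : point) : Prop :=
  exists (c : point) (r th s : R), 0 < r /\ (s = 1 \/ s = -1) /\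
    let V k := (fst c + r * cos (th + s * 2 * PI * INR k / 5),
                snd c + r * sin (th + s * 2 * PI * INR k / 5)) in
    V0 = V 0%nat /\ V1 = V 1%nat /\ V2 = V 2%nat /\ V3 = V 3%nat /\ V4 = V 4%nat.

(* Main.v *)
Require Import Defs.
From Stdlib Require Import Reals List Lra Psatz.
Open Scope R_scope.

Definition fmap (P0 P1 P2 Q0 Q1 Q2 X : point) : point :=
  let d := cross P0 P1 P0 P2 in
  let a := cross P0 X P0 P2 / d in
  let b := cross P0 P1 P0 X / d in
  (fst Q0 + a*(fst Q1 - fst Q0) + b*(fst Q2 - fst Q0),
   snd Q0 + a*(snd Q1 - snd Q0) + b*(snd Q2 - snd Q0)).

Definition comb (P0 P1 P2 : point) (a b : R) : point :=
  (fst P0 + a*(fst P1 - fst P0) + b*(fst P2 - fst P0),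
   snd P0 + a*(snd P1 - snd P0) + b*(snd P2 - snd P0)).

Lemma decomp P0 P1 P2 X : cross P0 P1 P0 P2 <> 0 ->
  exists a b, X = comb P0 P1 P2 a b.
Proof.
  intro H. exists (cross P0 X P0 P2 / cross P0 P1 P0 P2), (cross P0 P1 P0 X / cross P0 P1 P0 P2).
  destruct P0 as [p1 p2], P1 as [q1 q2], P2 as [r1 r2], X as [x1 x2].
  unfold comb, cross in *; simpl in *. f_equal; field; auto.
Qed.

Lemma fmap_coords P0 P1 P2 Q0 Q1 Q2 a b : cross P0 P1 P0 P2 <> 0 ->
  fmap P0 P1 P2 Q0 Q1 Q2 (comb P0 P1 P2 a b) = comb Q0 Q1 Q2 a b.
Proof.
  intro H.
  destruct P0 as [p1 p2], P1 as [q1 q2], P2 as [r1 r2].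
  unfold fmap, comb, cross in *; simpl in *. f_equal; field; auto.
Qed.

Lemma comb0 P0 P1 P2 : P0 = comb P0 P1 P2 0 0.
Proof. destruct P0; unfold comb; simpl; f_equal; ring. Qed.
Lemma comb1 P0 P1 P2 : P1 = comb P0 P1 P2 1 0.
Proof. destruct P0, P1; unfold comb; simpl; f_equal; ring. Qed.
Lemma comb2 P0 P1 P2 : P2 = comb P0 P1 P2 0 1.
Proof. destruct P0, P2; unfold comb; simpl; f_equal; ring. Qed.

Lemma cross_comb P0 P1 P2 a b c d e f :
  cross (comb P0 P1 P2 a b) (comb P0 P1 P2 c d) (comb P0 P1 P2 a b) (comb P0 P1 P2 e f)
  = cross P0 P1 P0 P2 * ((c-a)*(f-b) - (d-b)*(e-a)).
Proof. destruct P0, P1, P2; unfold comb, cross; simpl; ring. Qed.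

Lemma fmap_affine P0 P1 P2 Q0 Q1 Q2 : cross P0 P1 P0 P2 <> 0 -> cross Q0 Q1 Q0 Q2 <> 0 ->
  affine_map (fmap P0 P1 P2 Q0 Q1 Q2).
Proof.
  intros HP HQ. split; [|split].
  - intros X Y. destruct (decomp P0 P1 P2 X HP) as [a [b ->]].
    destruct (decomp P0 P1 P2 Y HP) as [c [d ->]].
    rewrite !fmap_coords by auto.
    unfold comb. destruct Q0 as [q1 q2], Q1 as [u1 u2], Q2 as [w1 w2]; simpl.
    intro Heq. injection Heq; intros E2 E1.
    unfold cross in HQ; simpl in HQ.
    assert (E1' : (a-c)*(u1-q1) + (b-d)*(w1-q1) = 0) by lra.
    assert (E2' : (a-c)*(u2-q2) + (b-d)*(w2-q2) = 0) by lra.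
    assert (Ha : (a - c) * ((u1 - q1) * (w2 - q2) - (u2 - q2) * (w1 - q1)) = 0).
    { transitivity ((w2-q2)*((a-c)*(u1-q1)+(b-d)*(w1-q1)) - (w1-q1)*((a-c)*(u2-q2)+(b-d)*(w2-q2))); [ring|].
      rewrite E1', E2'; ring. }
    assert (Hb : (b - d) * ((u1 - q1) * (w2 - q2) - (u2 - q2) * (w1 - q1)) = 0).
    { transitivity ((u1-q1)*((a-c)*(u2-q2)+(b-d)*(w2-q2)) - (u2-q2)*((a-c)*(u1-q1)+(b-d)*(w1-q1))); [ring|].
      rewrite E1', E2'; ring. }
    apply Rmult_integral in Ha; apply Rmult_integral in Hb.
    destruct Ha as [Ha|Ha]; [|contradiction]. destruct Hb as [Hb|Hb]; [|contradiction].
    replace c with a by lra. replace d with b by lra. reflexivity.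
  - intro Y. destruct (decomp Q0 Q1 Q2 Y HQ) as [a [b ->]].
    exists (comb P0 P1 P2 a b). apply fmap_coords; auto.
  - intros X Y Z. unfold collinear.
    destruct (decomp P0 P1 P2 X HP) as [a [b ->]].
    destruct (decomp P0 P1 P2 Y HP) as [c [d ->]].
    destruct (decomp P0 P1 P2 Z HP) as [e [f ->]].
    rewrite !fmap_coords by auto. rewrite !cross_comb.
    intro H. apply Rmult_integral in H. destruct H as [H|H]; [contradiction|].
    rewrite H; ring.
Qed.

Lemma frame_poly A B E x y u v :
  cross A B A E <> 0 ->
  parallel A B E (comb A B E x y) -> parallel B (comb A B E x y) A (comb A B E u v) ->
  parallel (comb A B E x y) (comb A B E u v) B E ->
  parallel (comb A B E u v) E (comb A B E x y) A -> parallel E A (comb A B E u v) B ->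
  y = 1 /\ u = 1 /\ v = x /\ x*x - x - 1 = 0.
Proof.
  intros Hd H1 H2 H3 H4 H5.
  destruct A as [a1 a2], B as [b1 b2], E as [e1 e2].
  unfold parallel, comb, cross in *; simpl in *.
  set (d := (b1 - a1) * (e2 - a2) - (b2 - a2) * (e1 - a1)) in *.
  assert (Hy : d * (y - 1) = 0) by (rewrite <- H1; unfold d; ring).
  assert (Hu : d * (1 - u) = 0) by (rewrite <- H5; unfold d; ring).
  apply Rmult_integral in Hy; destruct Hy as [Hy|Hy]; [contradiction|].
  apply Rmult_integral in Hu; destruct Hu as [Hu|Hu]; [contradiction|].
  replace y with 1 in * by lra. replace u with 1 in * by lra.
  assert (Hv : d * ((1 - x) + (v - 1)) = 0) by (rewrite <- H3; unfold d; ring).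
  apply Rmult_integral in Hv; destruct Hv as [Hv|Hv]; [contradiction|].
  replace v with x in * by lra.
  assert (Hx : d * (1 + x * (1 - x)) = 0) by (rewrite <- H4; unfold d; ring).
  apply Rmult_integral in Hx; destruct Hx as [Hx|Hx]; [contradiction|].
  repeat split; lra.
Qed.

Lemma chord a b c e : sin ((e+c)/2 - (b+a)/2) = 0 ->
  cross (cos a, sin a) (cos b, sin b) (cos c, sin c) (cos e, sin e) = 0.
Proof.
  intro H. unfold cross; simpl.
  rewrite (form2 b a), (form4 b a), (form2 e c), (form4 e c).
  rewrite sin_minus in H.
  transitivity (4*sin((b-a)/2)*sin((e-c)/2)*(sin ((e+c)/2) * cos ((b+a)/2) - cos ((e+c)/2) * sin ((b+a)/2))); [ring|].
  rewrite H; ring.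
Qed.

Definition ang (k : nat) : R := 0 + 1 * 2 * PI * INR k / 5.
Definition pt (k : nat) : point := (cos (ang k), sin (ang k)).

Lemma pent_reg : regular_pentagon (pt 0) (pt 1) (pt 2) (pt 3) (pt 4).
Proof.
  exists (0,0), 1, 0, 1. split; [lra|]. split; [left; reflexivity|].
  unfold pt, ang; simpl fst; simpl snd.
  repeat split; f_equal; ring.
Qed.

Lemma pent_par :
  parallel (pt 0) (pt 1) (pt 4) (pt 2) /\ parallel (pt 1) (pt 2) (pt 0) (pt 3) /\
  parallel (pt 2) (pt 3) (pt 1) (pt 4) /\ parallel (pt 3) (pt 4) (pt 2) (pt 0) /\
  parallel (pt 4) (pt 0) (pt 3) (pt 1).
Proof.
  unfold parallel, pt; repeat split; apply chord; unfold ang; simpl INR.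
  - replace ((0 + 1 * 2 * PI * (1 + 1) / 5 + (0 + 1 * 2 * PI * (1 + 1 + 1 + 1) / 5)) / 2 -
      (0 + 1 * 2 * PI * 1 / 5 + (0 + 1 * 2 * PI * 0 / 5)) / 2) with PI by field. apply sin_PI.
  - match goal with |- sin ?x = 0 => replace x with 0 by field end. apply sin_0.
  - match goal with |- sin ?x = 0 => replace x with 0 by field end. apply sin_0.
  - match goal with |- sin ?x = 0 => replace x with (-PI) by field end. rewrite sin_neg, sin_PI; ring.
  - match goal with |- sin ?x = 0 => replace x with 0 by field end. apply sin_0.
Qed.

Lemma pent_nc : cross (pt 0) (pt 1) (pt 0) (pt 4) <> 0.
Proof.
  unfold pt, ang, cross; simpl fst; simpl snd. simpl INR.
  replace (0 + 1 * 2 * PI * 0 / 5) with 0 by field.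
  replace (0 + 1 * 2 * PI * 1 / 5) with (2*PI/5) by field.
  replace (0 + 1 * 2 * PI * (1 + 1 + 1 + 1) / 5) with (- (2*PI/5) + 2*PI) by field.
  rewrite cos_plus, sin_plus, cos_2PI, sin_2PI, cos_neg, sin_neg, cos_0, sin_0.
  assert (Hs : 0 < sin (2*PI/5)) by (apply sin_gt_0; pose proof PI_RGT_0; lra).
  pose proof (sin2_cos2 (2*PI/5)) as Hsc. unfold Rsqr in Hsc.
  assert (Hc : cos (2*PI/5) < 1) by nra.
  intro H. nra.
Qed.

Lemma noncol (A B C D E : point) :
  NoDup (A :: B :: C :: D :: E :: nil) ->
  ~ all_collinear (A :: B :: C :: D :: E :: nil) ->
  parallel A B E C -> parallel E A D B -> cross A B A E <> 0.
Proof.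
  intros Hnd Hnc H1 H5 Hd. apply Hnc.
  inversion Hnd as [|? ? Hn _]; subst.
  assert (AB : A <> B) by (intro; apply Hn; left; auto).
  assert (AE : A <> E) by (intro; apply Hn; right; right; right; left; auto).
  exists A, B. split; auto.
  intros X HX. unfold collinear.
  destruct A as [a1 a2], B as [b1 b2], C as [c1 c2], D as [d1 d2], E as [e1 e2].
  unfold parallel, cross in *; simpl in *.
  destruct HX as [<-|[<-|[<-|[<-|[<-|[]]]]]]; simpl.
  - ring.
  - ring.
  - transitivity (((b1 - a1) * (e2 - a2) - (b2 - a2) * (e1 - a1)) + ((b1 - a1) * (c2 - e2) - (b2 - a2) * (c1 - e1))); [ring|].
    rewrite Hd, H1; ring.
  -
    set (k := (b1 - a1) * (d2 - a2) - (b2 - a2) * (d1 - a1)).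
    assert (K1 : k * (a1 - e1) = 0).
    { transitivity (-(b1 - a1) * ((a1 - e1) * (b2 - d2) - (a2 - e2) * (b1 - d1))
                    + (b1 - d1) * ((b1 - a1) * (e2 - a2) - (b2 - a2) * (e1 - a1))); [unfold k; ring|].
      rewrite H5, Hd; ring. }
    assert (K2 : k * (a2 - e2) = 0).
    { transitivity (-(b2 - a2) * ((a1 - e1) * (b2 - d2) - (a2 - e2) * (b1 - d1))
                    + (b2 - d2) * ((b1 - a1) * (e2 - a2) - (b2 - a2) * (e1 - a1))); [unfold k; ring|].
      rewrite H5, Hd; ring. }
    apply Rmult_integral in K1; apply Rmult_integral in K2.
    destruct K1 as [K1|K1]; auto. destruct K2 as [K2|K2]; auto.
    exfalso; apply AE; f_equal; lra.
  - exact Hd.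
Qed.

Lemma fmap_at0 P0 P1 P2 Q0 Q1 Q2 : cross P0 P1 P0 P2 <> 0 -> fmap P0 P1 P2 Q0 Q1 Q2 P0 = Q0.
Proof. intro H. transitivity (fmap P0 P1 P2 Q0 Q1 Q2 (comb P0 P1 P2 0 0)); [f_equal; apply comb0|].
  rewrite fmap_coords by auto. symmetry; apply comb0. Qed.
Lemma fmap_at1 P0 P1 P2 Q0 Q1 Q2 : cross P0 P1 P0 P2 <> 0 -> fmap P0 P1 P2 Q0 Q1 Q2 P1 = Q1.
Proof. intro H. transitivity (fmap P0 P1 P2 Q0 Q1 Q2 (comb P0 P1 P2 1 0)); [f_equal; apply comb1|].
  rewrite fmap_coords by auto. symmetry; apply comb1. Qed.
Lemma fmap_at2 P0 P1 P2 Q0 Q1 Q2 : cross P0 P1 P0 P2 <> 0 -> fmap P0 P1 P2 Q0 Q1 Q2 P2 = Q2.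
Proof. intro H. transitivity (fmap P0 P1 P2 Q0 Q1 Q2 (comb P0 P1 P2 0 1)); [f_equal; apply comb2|].
  rewrite fmap_coords by auto. symmetry; apply comb2. Qed.

Lemma cross_comb0 P0 P1 P2 c d e f :
  cross P0 (comb P0 P1 P2 c d) P0 (comb P0 P1 P2 e f) = cross P0 P1 P0 P2 * (c*f - d*e).
Proof. destruct P0, P1, P2; unfold comb, cross; simpl; ring. Qed.

Lemma comb_comb P0 P1 P2 a b c d s t :
  comb P0 (comb P0 P1 P2 a b) (comb P0 P1 P2 c d) s t = comb P0 P1 P2 (s*a + t*c) (s*b + t*d).
Proof. destruct P0, P1, P2; unfold comb; simpl; f_equal; ring. Qed.

Theorem proposition2 (A B C D E : point) :
  NoDup (A :: B :: C :: D :: E :: nil) ->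
  ~ all_collinear (A :: B :: C :: D :: E :: nil) ->
  parallel A B E C -> parallel B C A D -> parallel C D B E ->
  parallel D E C A -> parallel E A D B ->
  exists (f : point -> point) (V0 V1 V2 V3 V4 : point),
    affine_map f /\ regular_pentagon V0 V1 V2 V3 V4 /\
    ((A, B, C, D, E) = (f V0, f V1, f V2, f V3, f V4) \/
     (A, B, C, D, E) = (f V0, f V2, f V4, f V1, f V3)).
Proof.
  intros Hnd Hnc H1 H2 H3 H4 H5.
  pose proof (noncol _ _ _ _ _ Hnd Hnc H1 H5) as Hd.
  destruct (decomp A B E C Hd) as [x [y HC]].
  destruct (decomp A B E D Hd) as [u [v HD]]. subst C D.
  destruct (frame_poly A B E x y u v Hd H1 H2 H3 H4 H5) as [-> [-> [-> Hx]]].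
  pose proof pent_nc as Hr. destruct pent_par as [P1 [P2 [P3 [P4 P5]]]].
  pose proof pent_reg as Hreg.
  destruct (decomp (pt 0) (pt 1) (pt 4) (pt 2) Hr) as [xr [yr E2]].
  destruct (decomp (pt 0) (pt 1) (pt 4) (pt 3) Hr) as [ur [vr E3]].
  rewrite E2 in P1, P2, P3, P4, Hreg. rewrite E3 in P2, P3, P4, P5, Hreg.
  destruct (frame_poly (pt 0) (pt 1) (pt 4) xr yr ur vr Hr P1 P2 P3 P4 P5) as [-> [-> [-> Hxr]]].
  assert (Hcase : (x - xr) * (x + xr - 1) = 0) by nra.
  apply Rmult_integral in Hcase. destruct Hcase as [Hc|Hc].
  - exists (fmap (pt 0) (pt 1) (pt 4) A B E), (pt 0), (pt 1),
      (comb (pt 0) (pt 1) (pt 4) xr 1), (comb (pt 0) (pt 1) (pt 4) 1 xr), (pt 4).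
    split; [apply fmap_affine; auto|]. split; [exact Hreg|]. left.
    rewrite fmap_at0, fmap_at1, fmap_at2, !fmap_coords by auto.
    replace xr with x by lra. reflexivity.
  - set (Q2 := comb (pt 0) (pt 1) (pt 4) xr 1) in *.
    set (Q3 := comb (pt 0) (pt 1) (pt 4) 1 xr) in *.
    assert (HQ : cross (pt 0) Q2 (pt 0) Q3 <> 0).
    { unfold Q2, Q3. rewrite cross_comb0. intro H. apply Rmult_integral in H.
      destruct H as [H|H]; [contradiction|]. nra. }
    exists (fmap (pt 0) Q2 Q3 A B E), (pt 0), (pt 1), Q2, Q3, (pt 4).
    split; [apply fmap_affine; auto|]. split; [exact Hreg|]. right.
    assert (E4 : pt 4 = comb (pt 0) Q2 Q3 (1 - xr) 1).
    { unfold Q2, Q3. rewrite comb_comb.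
      transitivity (comb (pt 0) (pt 1) (pt 4) 0 1); [apply comb2|]. f_equal; nra. }
    assert (E1 : pt 1 = comb (pt 0) Q2 Q3 1 (1 - xr)).
    { unfold Q2, Q3. rewrite comb_comb.
      transitivity (comb (pt 0) (pt 1) (pt 4) 1 0); [apply comb1|]. f_equal; nra. }
    rewrite fmap_at0, fmap_at1, fmap_at2 by auto.
    rewrite E4 at 1. rewrite E1 at 1. rewrite !fmap_coords by auto.
    replace (1 - xr) with x by lra. reflexivity.
Qed.
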